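(* Let $p$ be a prime and let $\pi,\rho,\tau\in\mathbb{L}_p[t]$ be monic polynomials of positive degree with $\pi=\rho\cdot\tau$. Then $\pi$ is expansive if and only if both $\rho$ and $\tau$ are expansive.
   Context: $\mathbb{L}_p=\mathbb{Z}/p\mathbb{Z}[X,X^{-1}]$ is the ring of Laurent polynomials over $\mathbb{Z}/p\mathbb{Z}$. For nonzero $\alpha\in\mathbb{L}_p$, $\deg^+(\alpha)$ (resp. $\deg^-(\alpha)$) is the largest (resp. smallest) exponent of a monomial with nonzero coefficient; $\deg^+(0)=-\infty$, $\deg^-(0)=+\infty$. A monic polynomial $\alpha_0+\alpha_1t+\dots+\alpha_{n-1}t^{n-1}+t^n\in\mathbb{L}_p[t]$ ($n\ge1$) is expansive if $\alpha_0\neq0$ and (i) $\deg^+(\alpha_0)>0$ and $\deg^+(\alpha_0)>\deg^+(\alpha_i)$ for all $i\in\{1,\dots,n-1\}$, and (ii) $\deg^-(\alpha_0)<0$ and $\deg^-(\alpha_0)<\deg^-(\alpha_i)$ for all $i\in\{1,\dots,n-1\}$. *)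

(* Defs.v *)
(* L_p = Z/pZ[X,X^-1] is realised as the subring of the
   fraction field {fraction {poly 'F_p}} consisting of the elements X^m * q
   (m : int, q a polynomial); L_p[t] is realised as polynomials over this
   field all of whose coefficients are Laurent polynomials. *)
From HB Require Import structures.
From mathcomp Require Import all_boot all_order all_algebra.
From mathcomp Require Import boolp.
Set Implicit Arguments. Unset Strict Implicit. Unset Printing Implicit Defensive.
From mathcomp Require Import fraction.
Import Order.TTheory GRing.Theory Num.Theory.
Local Open Scope ring_scope.

Definition LF (p : nat) := {fraction {poly 'F_p}}.

Definition lfrac (p : nat) (q : {poly 'F_p}) : LF p := @FracField.tofrac _ q.

Definition LX (p : nat) : LF p := lfrac 'X.

Definition laurent (p : nat) (a : LF p) : Prop :=
  exists (m : int) (q : {poly 'F_p}), a = LX p ^ m * lfrac q.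

Definition laurent_poly (p : nat) (P : {poly LF p}) : Prop :=
  forall i : nat, laurent P`_i.

(* normal form of a nonzero Laurent polynomial: a = X^m * q with q(0) <> 0;
   then deg^- a = m and deg^+ a = m + deg q. *)
Definition lrep_spec (p : nat) (a : LF p) (r : int * {poly 'F_p}) : Prop :=
  a = LX p ^ r.1 * lfrac r.2 /\ (r.2)`_0 != 0.

Definition lrep (p : nat) (a : LF p) : int * {poly 'F_p} :=
  match pselect (exists r, lrep_spec a r) with
  | left H => projT1 (cid H)
  | right _ => (0%R, 0%R)
  end.

(* only meaningful for nonzero Laurent polynomials; the values
   deg^+(0) = -oo, deg^-(0) = +oo are handled in [expansive] *)
Definition degm (p : nat) (a : LF p) : int := (lrep a).1.
Definition degp (p : nat) (a : LF p) : int :=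
  (lrep a).1 + ((size (lrep a).2).-1)%:Z.

(* monic P = a_0 + a_1 t + ... + t^n, n >= 1, is expansive.
   Conditions for a_i = 0 are vacuous since deg^+(0) = -oo, deg^-(0) = +oo. *)
Definition expansive (p : nat) (P : {poly LF p}) : Prop :=
  let n := (size P).-1 in
  [/\ P \is monic, (1 <= n)%N, P`_0 != 0,
      (0 < degp P`_0) /\
        (forall i : nat, (1 <= i < n)%N -> P`_i != 0 -> degp P`_i < degp P`_0)
    & (degm P`_0 < 0) /\
        (forall i : nat, (1 <= i < n)%N -> P`_i != 0 -> degm P`_0 < degm P`_i)].

(* Main.v *)
Require Import Defs.
From HB Require Import structures.
From mathcomp Require Import all_boot all_order all_algebra fraction boolp.
From mathcomp Require Import zify.
Import Order.TTheory GRing.Theory Num.Theory.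
Local Open Scope ring_scope.
Set Implicit Arguments. Unset Strict Implicit.

From mathcomp Require Import lra.
Record vstruct (K : idomainType) (L : K -> Prop) (d : K -> int) : Prop := VS {
  vL0 : L 0; vL1 : L 1;
  vLD : forall a b, L a -> L b -> L (a + b);
  vLM : forall a b, L a -> L b -> L (a * b);
  vLN : forall a, L a -> L (- a);
  vd1 : d 1 = 0;
  vdM : forall a b, L a -> L b -> a != 0 -> b != 0 -> d (a * b) = d a + d b;
  vdD : forall a b, L a -> L b -> a != 0 -> b != 0 -> a + b != 0 ->
          d (a + b) <= d a \/ d (a + b) <= d b }.

Lemma vdN (K : idomainType) L d (hv : @vstruct K L d) a : L a -> a != 0 -> d (- a) = d a.
Proof.
move=> La a0.
have LN1 : L (-1) by apply: (vLN hv); exact: (vL1 hv).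
have N10 : (-1 : K) != 0 by rewrite oppr_eq0 oner_neq0.
have h1 : d (-1) = 0.
  have := vdM hv LN1 LN1 N10 N10; rewrite mulrNN mulr1 (vd1 hv). lia.
by rewrite -mulN1r (vdM hv LN1 La N10 a0) h1 add0r.
Qed.

Lemma ult_strict (K : idomainType) L d (hv : @vstruct K L d) e s :
  L e -> L s -> e != 0 -> (s != 0 -> d s < d e) -> e + s != 0 /\ d (e + s) = d e.
Proof.
move=> Le Ls e0 hs.
have [->|s0] := eqVneq s 0; first by rewrite addr0.
have hs' := hs s0.
have es0 : e + s != 0.
  apply/negP => /eqP h; have : s = - e by rewrite -(addKr e s) h addr0.
  by move=> E; move: hs'; rewrite E (vdN hv Le e0) ltxx.
split => //.
have Les : L (e + s) by apply: (vLD hv).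
have LNs : L (- s) by apply: (vLN hv).
have Ns0 : - s != 0 by rewrite oppr_eq0.
have := vdD hv Les LNs es0 Ns0; rewrite addrK (vdN hv Ls s0) => /(_ e0) H.
have := vdD hv Le Ls e0 s0 es0. move: H hs'. lia.
Qed.

Lemma sum_bound (K : idomainType) L d (hv : @vstruct K L d) (I : finType) (P : pred I)
   (F : I -> K) (B : int) :
  (forall i, P i -> L (F i) /\ (F i != 0 -> d (F i) < B)) ->
  L (\sum_(i | P i) F i) /\ (\sum_(i | P i) F i != 0 -> d (\sum_(i | P i) F i) < B).
Proof.
move=> hF.
apply: (big_ind (fun x => L x /\ (x != 0 -> d x < B))) => //.
  by split; [exact: (vL0 hv)|rewrite eqxx].
move=> x y [Lx hx] [Ly hy]; split; first by apply: (vLD hv).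
have [->|x0] := eqVneq x 0; first by rewrite add0r.
have [->|y0] := eqVneq y 0; first by rewrite addr0.
move=> xy0; have := vdD hv Lx Ly x0 y0 xy0; have := hx x0; have := hy y0; lia.
Qed.

Lemma top_exists (K : idomainType) (d : K -> int) (f : nat -> K) (n : nat) :
  (exists k, (k < n)%N /\ f k != 0) ->
  exists i, [/\ (i < n)%N, f i != 0,
     (forall k, (k < n)%N -> f k != 0 -> d (f k) <= d (f i)) &
     (forall k, (i < k < n)%N -> f k != 0 -> d (f k) < d (f i))].
Proof.
elim: n => [[k [//]]|n IH] hex.
have [hn|hn] := boolP [exists k : 'I_n, f k != 0].
  have [|i [Hi Fi Hmax Hstr]] := IH.
    by case/existsP: hn => k Hk; exists k.
  have [fn0|fn0] := eqVneq (f n) 0.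
    exists i; split => //; first by rewrite ltnS ltnW.
      move=> k; rewrite ltnS leq_eqVlt => /orP [/eqP ->|]; first by rewrite fn0 eqxx.
      exact: Hmax.
    move=> k /andP [ik]; rewrite ltnS leq_eqVlt => /orP [/eqP ->|kn]; first by rewrite fn0 eqxx.
    by apply: Hstr; rewrite ik kn.
  have [le|lt] := lerP (d (f i)) (d (f n)).
    exists n; split => //.
      move=> k; rewrite ltnS leq_eqVlt => /orP [/eqP -> //|kn] fk.
      exact: le_trans (Hmax k kn fk) le.
    by move=> k /andP [nk kn]; move: (leq_trans nk kn); rewrite ltnn.
  exists i; split => //; first by rewrite ltnS ltnW.
    move=> k; rewrite ltnS leq_eqVlt => /orP [/eqP ->|kn] fk; first exact: ltW.
    exact: Hmax.
  move=> k /andP [ik]; rewrite ltnS leq_eqVlt => /orP [/eqP -> //|kn].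
  by apply: Hstr; rewrite ik kn.
have fn : f n != 0.
  case: hex => k [kn fk]; move: kn; rewrite ltnS leq_eqVlt => /orP [/eqP <- //|kn].
  by move: hn; rewrite negb_exists => /forallP /(_ (Ordinal kn)); rewrite fk.
have fz k : (k < n)%N -> f k = 0.
  move=> kn; move: hn; rewrite negb_exists => /forallP /(_ (Ordinal kn)) /=.
  by rewrite negbK => /eqP.
exists n; split => //.
  move=> k; rewrite ltnS leq_eqVlt => /orP [/eqP -> //|kn]; by rewrite fz // eqxx.
by move=> k /andP [nk kn]; move: (leq_trans nk kn); rewrite ltnn.
Qed.

Definition istop (K : idomainType) (d : K -> int) (R : {poly K}) (i : nat) :=
  [/\ R`_i != 0, (forall k, R`_k != 0 -> d R`_k <= d R`_i) &
      (forall k, (i < k)%N -> R`_k != 0 -> d R`_k < d R`_i)].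

Lemma top_poly (K : idomainType) (d : K -> int) (R : {poly K}) :
  R != 0 -> exists i, istop d R i.
Proof.
move=> R0.
have [|i [Hi Ri Hmax Hstr]] := @top_exists K d (fun k => R`_k) (size R).
  exists (size R).-1; split; first by rewrite prednK // lt0n size_poly_eq0.
  by rewrite -lead_coefE lead_coef_eq0.
have sz k : R`_k != 0 -> (k < size R)%N.
  by move=> Rk; rewrite ltnNge; apply/negP => /(nth_default 0); apply/eqP.
exists i; split => //.
  by move=> k Rk; apply: Hmax => //; apply: sz.
by move=> k ik Rk; apply: Hstr => //; rewrite ik sz.
Qed.

Lemma key (K : idomainType) L d (hv : @vstruct K L d) (R T : {poly K}) i1 j1 :
  (forall i, L R`_i) -> (forall i, L T`_i) -> istop d R i1 -> istop d T j1 ->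
  [/\ (R * T)`_(i1 + j1) != 0, d (R * T)`_(i1 + j1) = d R`_i1 + d T`_j1 &
      forall k, (i1 + j1 < k)%N -> (R * T)`_k != 0 -> d (R * T)`_k < d R`_i1 + d T`_j1].
Proof.
move=> LR LT [Ri Rmax Rstr] [Tj Tmax Tstr].
set B := d R`_i1 + d T`_j1.
have term i j : (i1 < i)%N || (j1 < j)%N ->
    L (R`_i * T`_j) /\ (R`_i * T`_j != 0 -> d (R`_i * T`_j) < B).
  move=> hij; split; first exact: (vLM hv).
  rewrite mulf_eq0 negb_or => /andP [Ri0 Tj0].
  rewrite (vdM hv (LR i) (LT j) Ri0 Tj0) /B.
  case/orP: hij => h.
    have := Rstr _ h Ri0; have := Tmax _ Tj0; lia.
  have := Rmax _ Ri0; have := Tstr _ h Tj0; lia.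
have hB : (i1 < (i1 + j1).+1)%N by rewrite ltnS leq_addr.
have [ne eq] : (R * T)`_(i1 + j1) != 0 /\ d (R * T)`_(i1 + j1) = B.
  rewrite coefM (bigD1 (Ordinal hB)) //= addKn.
  have Ri1 : R`_i1 * T`_j1 != 0 by rewrite mulf_neq0.
  set S := (X in _ + X).
  have [Ls hs] : L S /\ (S != 0 -> d S < B).
    rewrite /S; apply: (@sum_bound K L d hv _ (fun i => i != Ordinal hB) (fun i : 'I__ => R`_i * T`_(i1+j1-i)) B) => i hi; apply: term.
    have : nat_of_ord i != i1 by apply: contra hi => /eqP h; apply/eqP/val_inj.
    have := ltn_ord i; lia.
  have := ult_strict hv (vLM hv (LR _) (LT _)) Ls Ri1.
  rewrite (vdM hv (LR _) (LT _) Ri (Tj)) => /(_ hs) [] //.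
split => // k hk.
rewrite coefM.
set S := \sum_(_ < _) _.
have [_ hs] : L S /\ (S != 0 -> d S < B).
  rewrite /S; apply: (@sum_bound K L d hv _ predT (fun i : 'I__ => R`_i * T`_(k-i)) B) => i _; apply: term; have := ltn_ord i; lia.
exact: hs.
Qed.

Definition Cd (K : idomainType) (d : K -> int) (P : {poly K}) :=
  P`_0 != 0 /\ forall i, (1 <= i)%N -> P`_i != 0 -> d P`_i < d P`_0.

Lemma Cd_top (K : idomainType) (d : K -> int) (R : {poly K}) i :
  Cd d R -> istop d R i -> i = 0%N.
Proof.
move=> [R0 HR] [Ri Rmax _]; apply/eqP; rewrite -leqn0 leqNgt; apply/negP => hi.
have := HR _ hi Ri; have := Rmax _ R0; lia.
Qed.

Lemma abstract_main (K : idomainType) L d (hv : @vstruct K L d) (R T : {poly K}) :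
  (forall i, L R`_i) -> (forall i, L T`_i) -> R != 0 -> T != 0 ->
  (Cd d (R * T) <-> Cd d R /\ Cd d T).
Proof.
move=> LR LT R0 T0.
have [i1 ti] := top_poly d R0; have [j1 tj] := top_poly d T0.
have [ne eq str] := key hv LR LT ti tj.
split.
  move=> [P0 HP].
  rewrite coef0M mulf_eq0 negb_or in P0; case/andP: P0 => R00 T00.
  have ij0 : (i1 + j1 = 0)%N.
    apply/eqP; rewrite -leqn0 leqNgt; apply/negP => h.
    have := HP _ h ne; rewrite eq coef0M (vdM hv (LR 0%N) (LT 0%N) R00 T00).
    case: ti => _ Rm _; case: tj => _ Tm _.
    have := Rm _ R00; have := Tm _ T00; lia.
  have i10 : i1 = 0%N by lia.
  have j10 : j1 = 0%N by lia.
  move: ti tj; rewrite i10 j10 => -[_ _ Rs] [_ _ Ts].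
  by split; split.
move=> [CR CT].
have i10 := Cd_top CR ti; have j10 := Cd_top CT tj.
move: ne eq str; rewrite i10 j10 /= => ne eq str.
split => // i hi Pi; rewrite eq; exact: str.
Qed.

Lemma lfracM p (q r : {poly 'F_p}) : lfrac (q * r) = lfrac q * lfrac r.
Proof. exact: tofracM. Qed.
Lemma lfracD p (q r : {poly 'F_p}) : lfrac (q + r) = lfrac q + lfrac r.
Proof. exact: tofracD. Qed.
Lemma lfracN p (q : {poly 'F_p}) : lfrac (- q) = - lfrac q.
Proof. exact: tofracN. Qed.
Lemma lfrac0 p : lfrac (0 : {poly 'F_p}) = 0.
Proof. exact: tofrac0. Qed.
Lemma lfrac1 p : lfrac (1 : {poly 'F_p}) = 1.
Proof. exact: tofrac1. Qed.
Lemma lfrac_inj p (q r : {poly 'F_p}) : lfrac q = lfrac r -> q = r.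
Proof. by move=> h; apply/eqP; rewrite -tofrac_eq; apply/eqP. Qed.
Lemma lfrac_eq0 p (q : {poly 'F_p}) : (lfrac q == 0) = (q == 0).
Proof. exact: tofrac_eq0. Qed.

Lemma LX_neq0 p : LX p != 0.
Proof. by rewrite /LX lfrac_eq0 polyX_eq0. Qed.

Lemma LXn p (n : nat) : LX p ^ (n%:Z) = lfrac ('X^n).
Proof. by rewrite /LX /lfrac tofracXn. Qed.

Lemma LXD p (m n : int) : LX p ^ (m + n) = LX p ^ m * LX p ^ n.
Proof. exact: expfzDr (LX_neq0 p). Qed.

Lemma LXm_neq0 p (m : int) : LX p ^ m != 0.
Proof. exact: expfz_neq0 (LX_neq0 p). Qed.

Lemma shift (m m' : int) : m <= m' -> exists n : nat, m' = m + n%:Z.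
Proof. move=> h; exists `|m' - m|%N; rewrite gez0_abs ?subr_ge0 //; lia. Qed.

Lemma nf (F : fieldType) (q : {poly F}) : q != 0 ->
  exists k q', q = q' * 'X^k /\ q'`_0 != 0.
Proof.
elim: (size q) {-2}q (leqnn (size q)) => [|n IH] r hr r0.
  by move: r0; rewrite -size_poly_eq0; move: hr; rewrite leqn0 => ->.
have [h0|h0] := eqVneq r`_0 0; last by exists 0%N, r; rewrite expr0 mulr1.
have E : r = drop_poly 1 r * 'X^1.
  have T0 : take_poly 1 r = 0.
    by apply/polyP => -[|i]; rewrite coef_take_poly coef0 //= h0.
  by rewrite -{1}(poly_take_drop 1 r) T0 add0r.
have d0 : drop_poly 1 r != 0 by apply: contra r0 => /eqP h; rewrite E h mul0r.
have [|k [q' [E' q0]]] := IH (drop_poly 1 r) _ d0.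
  by rewrite size_drop_poly; move: hr; lia.
exists k.+1, q'; split => //; by rewrite E E' -mulrA -exprD addn1.
Qed.

Lemma nz_of_c0 (F : fieldType) (q : {poly F}) : q`_0 != 0 -> q != 0.
Proof. by apply: contraNneq => ->; rewrite coef0. Qed.

Lemma uniq_aux p (m : int) (n : nat) (q q' : {poly 'F_p}) :
  q`_0 != 0 -> LX p ^ m * lfrac q = LX p ^ (m + n%:Z) * lfrac q' -> n = 0%N /\ q = q'.
Proof.
move=> q0; rewrite LXD LXn -mulrA => /(mulfI (LXm_neq0 p m)).
rewrite -lfracM => /lfrac_inj E.
have n0 : n = 0%N.
  case: n E => // n E; move: q0; rewrite E coefXnM /=.
  by [].
by move: E; rewrite n0 expr0 mul1r.
Qed.

Lemma spec_uniq p (a : LF p) r r' : lrep_spec a r -> lrep_spec a r' -> r = r'.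
Proof.
case: r => m q; case: r' => m' q'; rewrite /lrep_spec /= => -[E q0] [E' q0'].
have [le|le] := lerP m m'.
  have [n En] := shift le.
  move: E'; rewrite E En => /(uniq_aux q0) [n0 ->].
  by rewrite n0 addr0.
have [n En] := shift (ltW le).
move: E; rewrite E' En => /(uniq_aux q0') [n0 ->].
by rewrite n0 addr0.
Qed.

Lemma lrep_eq p (a : LF p) r : lrep_spec a r -> lrep a = r.
Proof.
move=> hr; rewrite /lrep; case: pselect => [H|H]; last by exfalso; apply: H; exists r.
by case: (cid H) => r' hr' /=; apply: spec_uniq hr' hr.
Qed.

Lemma rep_bound p (a : LF p) (m : int) (q : {poly 'F_p}) :
  a = LX p ^ m * lfrac q -> q != 0 ->
  exists k : nat, [/\ lrep_spec a (m + k%:Z, (lrep a).2),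
     degm a = m + k%:Z & degp a = m + ((size q).-1)%:Z].
Proof.
move=> Ea q0; have [k [q' [Eq q0']]] := nf q0.
have sp : lrep_spec a (m + k%:Z, q').
  split => //=; rewrite Ea Eq LXD LXn lfracM; rewrite mulrAC -!mulrA; congr (_ * _).
have E := lrep_eq sp.
exists k; rewrite /degm /degp E /=; split => //.
rewrite Eq size_mulXn ?nz_of_c0 //.
have : (0 < size q')%N by rewrite lt0n size_poly_eq0 nz_of_c0.
case: (size q') => // s _; rewrite addnS /=; lia.
Qed.

Lemma lrep_ex p (a : LF p) : laurent a -> a != 0 -> lrep_spec a (lrep a).
Proof.
move=> [m [q Ea]] a0.
have q0 : q != 0 by apply: contra a0 => /eqP q0; rewrite Ea q0 lfrac0 mulr0.
have [k [sp _ _]] := rep_bound Ea q0.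
by rewrite (lrep_eq sp).
Qed.

Lemma laurent0 p : laurent (0 : LF p).
Proof. by exists 0, 0; rewrite lfrac0 mulr0. Qed.
Lemma laurent1 p : laurent (1 : LF p).
Proof. by exists 0, 1; rewrite lfrac1 expr0z mulr1. Qed.
Lemma laurentN p (a : LF p) : laurent a -> laurent (- a).
Proof. by move=> [m [q ->]]; exists m, (- q); rewrite lfracN mulrN. Qed.
Lemma laurentM p (a b : LF p) : laurent a -> laurent b -> laurent (a * b).
Proof.
move=> [m [q ->]] [m' [q' ->]]; exists (m + m'), (q * q').
by rewrite LXD lfracM mulrACA.
Qed.
Lemma laurentD_aux p (m m' : int) (q q' : {poly 'F_p}) : m <= m' ->
  LX p ^ m * lfrac q + LX p ^ m' * lfrac q' = LX p ^ m * lfrac (q + 'X^`|m' - m|%N * q').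
Proof.
move=> le; have [n En] := shift le.
have -> : `|m' - m|%N = n by rewrite En (addrC m) addrK.
by rewrite En LXD LXn lfracD lfracM mulrDr mulrA.
Qed.
Lemma laurentD p (a b : LF p) : laurent a -> laurent b -> laurent (a + b).
Proof.
move=> [m [q ->]] [m' [q' ->]].
have [le|le] := lerP m m'.
  by rewrite laurentD_aux //; exists m, (q + 'X^`|m' - m|%N * q').
by rewrite addrC laurentD_aux ?ltW //; exists m', (q' + 'X^`|m - m'|%N * q).
Qed.

Lemma degp1 p : degp (1 : LF p) = 0.
Proof.
have E : (1 : LF p) = LX p ^ 0 * lfrac 1 by rewrite lfrac1 expr0z mulr1.
have [k [_ _ ->]] := rep_bound E (oner_neq0 _).
by rewrite size_poly1.
Qed.
Lemma degm1 p : degm (1 : LF p) = 0.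
Proof.
have sp : lrep_spec (1 : LF p) (0, 1) by split; rewrite ?lfrac1 ?expr0z ?mulr1 ?coef1.
by rewrite /degm (lrep_eq sp).
Qed.

Lemma degM p (a b : LF p) : laurent a -> laurent b -> a != 0 -> b != 0 ->
  degp (a * b) = degp a + degp b /\ degm (a * b) = degm a + degm b.
Proof.
move=> La Lb a0 b0.
have := lrep_ex La a0; have := lrep_ex Lb b0.
rewrite /degp /degm.
case: (lrep a) => ma qa; case: (lrep b) => mb qb [/= Eb qb0] [/= Ea qa0].
have sp : lrep_spec (a * b) (ma + mb, qa * qb).
  split => /=; first by rewrite Ea Eb LXD lfracM mulrACA.
  by rewrite coef0M mulf_neq0.
rewrite (lrep_eq sp) /=; split; last by [].
rewrite size_mul ?nz_of_c0 //.
have := nz_of_c0 qa0; have := nz_of_c0 qb0; rewrite -!size_poly_eq0.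
case: (size qa) => // sa; case: (size qb) => // sb _ _.
rewrite addSn /= addnS /=; lia.
Qed.

Lemma degD_aux p (a b : LF p) : laurent a -> laurent b -> a != 0 -> b != 0 -> a + b != 0 ->
  degm a <= degm b ->
  degm a <= degm (a + b) /\ (degp (a + b) <= degp a \/ degp (a + b) <= degp b).
Proof.
move=> La Lb a0 b0 ab0.
have := lrep_ex La a0; have := lrep_ex Lb b0.
rewrite /degp /degm.
case: (lrep a) => ma qa; case: (lrep b) => mb qb [/= Eb qb0] [/= Ea qa0] /= le.
have E : a + b = LX p ^ ma * lfrac (qa + 'X^`|mb - ma|%N * qb) by rewrite Ea Eb laurentD_aux.
have [n En] := shift le.
have nE : `|mb - ma|%N = n by rewrite En (addrC ma) addrK.
rewrite nE in E.
have s0 : qa + 'X^n * qb != 0.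
  by apply: contra ab0 => /eqP h; rewrite E h lfrac0 mulr0.
have [k [_ Hm Hp]] := rep_bound E s0.
move: Hm Hp; rewrite /degp /degm => -> ->; split; first lia.
have hs := size_polyD qa ('X^n * qb).
have hX : size ('X^n * qb) = (n + size qb)%N by rewrite mulrC size_mulXn ?nz_of_c0.
rewrite hX in hs.
move: hs; rewrite En.
have := nz_of_c0 qa0; have := nz_of_c0 qb0; rewrite -!size_poly_eq0.
case: (size qa) => // sa; case: (size qb) => // sb _ _.
case: (size (qa + 'X^n * qb)) => [|s] /= hs; lia.
Qed.

Lemma degD p (a b : LF p) : laurent a -> laurent b -> a != 0 -> b != 0 -> a + b != 0 ->
  (- degm (a + b) <= - degm a \/ - degm (a + b) <= - degm b) /\
  (degp (a + b) <= degp a \/ degp (a + b) <= degp b).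
Proof.
move=> La Lb a0 b0 ab0.
have [le|le] := lerP (degm a) (degm b).
  have [h1 h2] := degD_aux La Lb a0 b0 ab0 le.
  by split => //; left; rewrite lerN2.
rewrite addrC in ab0 *.
have [h1 h2] := degD_aux Lb La b0 a0 ab0 (ltW le).
by split; [right; rewrite lerN2 | case: h2; auto].
Qed.

Lemma vs_p p : vstruct (@laurent p) (@degp p).
Proof.
split.
- exact: laurent0.
- exact: laurent1.
- exact: laurentD.
- exact: laurentM.
- exact: laurentN.
- exact: degp1.
- by move=> a b La Lb a0 b0; case: (degM La Lb a0 b0).
- by move=> a b La Lb a0 b0 ab0; case: (degD La Lb a0 b0 ab0).
Qed.

Lemma vs_m p : vstruct (@laurent p) (fun a => - degm a).
Proof.
split.
- exact: laurent0.
- exact: laurent1.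
- exact: laurentD.
- exact: laurentM.
- exact: laurentN.
- by rewrite degm1.
- by move=> a b La Lb a0 b0; case: (degM La Lb a0 b0) => _ ->; rewrite opprD.
- by move=> a b La Lb a0 b0 ab0; case: (degD La Lb a0 b0 ab0).
Qed.

Lemma exp_iff p (P : {poly LF p}) : P \is monic -> (1 < size P)%N ->
  expansive P <-> Cd (@degp p) P /\ Cd (fun a => - degm a) P.
Proof.
move=> mon sz.
have Pn : P`_(size P).-1 = 1 by move: mon => /monicP; rewrite lead_coefE.
have Pbig i : ((size P).-1 < i)%N -> P`_i = 0.
  by move=> h; apply: nth_default; move: h sz; case: (size P).
have n1 : (1 <= (size P).-1)%N by move: sz; case: (size P) => // -[].
have case3 i : (1 <= i)%N -> [\/ (1 <= i < (size P).-1)%N, i = (size P).-1 |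
                                  ((size P).-1 < i)%N].
  move=> h; have [lt|eq|gt] := ltngtP i (size P).-1.
  - by constructor 1; rewrite h.
  - by constructor 3.
  - by constructor 2.
rewrite /expansive /Cd; split.
  move=> [_ _ P0 [dp Hp] [dm Hm]]; split; split => // i hi Pi.
    case: (case3 i hi) => [h|->|h]; first exact: Hp.
      by rewrite Pn degp1.
    by move: Pi; rewrite Pbig ?eqxx.
  case: (case3 i hi) => [h|->|h]; first by rewrite lterN2; apply: Hm.
    by rewrite Pn degm1 oppr0 oppr_gt0.
  by move: Pi; rewrite Pbig ?eqxx.
move=> [[P0 Hp] [_ Hm]]; split => //.
- split; first by have := Hp _ n1; rewrite Pn degp1 oner_neq0; apply.
  by move=> i /andP [hi _]; apply: Hp.
- split; first by have := Hm _ n1; rewrite Pn degm1 oner_neq0 oppr0 oppr_gt0; apply.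
  by move=> i /andP [hi _] Pi; have := Hm _ hi Pi; rewrite ltrN2.
Qed.

Unset Implicit Arguments.

Theorem lemma1 (p : nat) (pi rho tau : {poly LF p}) :
  prime p ->
  laurent_poly pi -> laurent_poly rho -> laurent_poly tau ->
  pi \is monic -> rho \is monic -> tau \is monic ->
  (1 < size pi)%N -> (1 < size rho)%N -> (1 < size tau)%N ->
  pi = rho * tau ->
  (expansive pi <-> expansive rho /\ expansive tau).
Proof.
move=> _ Lpi Lr Lt mpi mr mt spi sr st E.
have e1 := exp_iff mpi spi; have e2 := exp_iff mr sr; have e3 := exp_iff mt st.
have r0 : rho != 0 by apply: monic_neq0.
have t0 : tau != 0 by apply: monic_neq0.
have h1 := abstract_main (vs_p p) Lr Lt r0 t0.
have h2 := abstract_main (vs_m p) Lr Lt r0 t0.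
rewrite -E in h1 h2.
split.
  move/e1 => [/h1 [a b] /h2 [c d]].
  by split; [apply/e2; split | apply/e3; split].
move=> [/e2 [a c] /e3 [b d]]; apply/e1.
by split; [apply/h1 | apply/h2]; split.
Qed.
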